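(* Let $(p_n)_n$, $(q_n)_n$ be real sequences with $0<p_n,q_n\le 1$, $p_nq_n\to 0$ and $\frac{p_nq_n^2n}{\log n}\to\infty$ as $n\to\infty$. Let $\rho_n=\frac{p_nq_n^2n}{1+\log n}$ and $r_n=\lceil \rho_n^{-1/3}p_n^{-1}\rceil$. Let $(F_n)_n$ and $(s_n)_n$ be real sequences with $F_n=O(p_nq_nn)$, $s_n=q_n(1+o(1))$, and $F_ns_n$ a nonnegative integer for every $n$, and let $B_n\sim\mathrm{Bin}(F_ns_n,(1-p_n)^{r_n})$. Then for every $\varepsilon>0$, \[ P\bigl(|B_n+F_n(1-s_n)-F_n(1-p_nq_n)^{r_n}|>\varepsilon p_n^2q_n^2nr_n\bigr)=o\!\left(\frac{p_n^2q_nr_n}{n^2}\right)\quad (n\to\infty). \]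
   Context: $\mathrm{Bin}(m,\theta)$ denotes the binomial distribution with $m$ trials and success probability $\theta$. Asymptotic notations $o$, $O$ refer to $n\to\infty$. *)

(* Defs.v *)
From mathcomp Require Import all_boot all_order all_algebra.
From mathcomp Require Import all_classical all_reals all_analysis.
Set Implicit Arguments. Unset Strict Implicit. Unset Printing Implicit Defensive.
Import Order.TTheory GRing.Theory Num.Theory.
Local Open Scope ring_scope.

Definition rho {R : realType} (p q : nat -> R) (n : nat) : R :=
  p n * q n ^+ 2 * n%:R / (1 + ln n%:R).

(* r_n = ceil(rho_n^(-1/3) p_n^(-1)), as a natural number (it is >= 1 since
   the argument is > 0 for n >= 1) *)
Definition rr {R : realType} (p q : nat -> R) (n : nat) : nat :=
  `| Num.ceil (powR (rho p q n) (- (1/3)) / p n) |%N.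

(* Main.v *)
Require Import Defs.
From mathcomp Require Import all_boot all_order all_algebra.
From mathcomp Require Import all_classical all_reals all_analysis.
From mathcomp Require Import ring lra.
Import Order.TTheory GRing.Theory Num.Theory.
Local Open Scope classical_set_scope.
Local Open Scope ring_scope.

Section Tail.
Context {R : realType}.

Lemma binsum (th ph z : R) m :
  \sum_(k < m.+1) ((th ^+ k * ph ^+ (m - k) *+ 'C(m, k)) * z ^+ (m - k))
  = (ph * z + th) ^+ m.
Proof.
rewrite exprDn; apply: eq_bigr => k _.
rewrite exprMn; set c := 'C(m, k).
rewrite -(mulr_natr _ c) -[in RHS](mulr_natr _ c); ring.
Qed.

Lemma pow_le_exp (th ph z : R) m : 0 <= ph * z + th -> th + ph = 1 ->
  (ph * z + th) ^+ m <= expR (m%:R * (ph * (z - 1))).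
Proof.
move=> h0 h1; rewrite expRM_natl; apply: lerXn2r.
- by rewrite nnegrE.
- by rewrite nnegrE expR_ge0.
have := expR_ge1Dx (ph * (z - 1)).
have -> : ph * z + th = 1 + ph * (z - 1). have eth : th = 1 - ph by lra.
  rewrite eth; ring.
by [].
Qed.

Lemma expl_le (l : R) : 0 <= l <= 1/2 -> expR l <= 1 + l + 2 * l ^+ 2.
Proof.
move=> /andP[l0 l1].
have h1 := expR_ge1Dx (- l).
have h2 : expR l * expR (- l) = 1 by rewrite -expRD subrr expR0.
have h3 := expR_gt0 l.
have h4 : expR l * (1 - l) <= 1.
  rewrite -h2; apply: ler_wpM2l; [exact: ltW|lra].
rewrite -(@ler_pM2r _ (1 - l)); last lra.
apply: le_trans h4 _.
have h5 : 0 <= l ^+ 2 * (1 - 2 * l) by apply: mulr_ge0; [exact: sqr_ge0|lra].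
have -> : (1 + l + 2 * l ^+ 2) * (1 - l) = 1 + l ^+ 2 * (1 - 2 * l) by ring.
lra.
Qed.

Lemma expNl_le (l : R) : 0 <= l <= 1/2 -> expR (- l) <= 1 - l + 2 * l ^+ 2.
Proof.
move=> /andP[l0 l1].
have h1 := expR_ge1Dx l.
have h2 : expR l * expR (- l) = 1 by rewrite -expRD subrr expR0.
have h3 := expR_gt0 (- l).
have h4 : expR (- l) * (1 + l) <= 1.
  rewrite -h2 [expR l * _]mulrC; apply: ler_wpM2l; [exact: ltW|lra].
rewrite -(@ler_pM2r _ (1 + l)); last lra.
apply: le_trans h4 _.
have h5 : 0 <= l ^+ 2 * (1 + 2 * l) by apply: mulr_ge0; [exact: sqr_ge0|lra].
have -> : (1 - l + 2 * l ^+ 2) * (1 + l) = 1 + l ^+ 2 * (1 + 2 * l) by ring.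
lra.
Qed.


Lemma exp_ge1 (x : R) : 0 <= x -> 1 <= expR x.
Proof. move=> x0; have := expR_ge1Dx x; lra. Qed.

Lemma tail (m : nat) (th l t : R) (U : set nat) :
  0 <= th <= 1 -> 0 <= l <= 1/2 ->
  (forall k, U k -> t < `|k%:R - m%:R * th|) ->
  (binomial_prob m th U <=
     (2 * expR (2 * (m%:R * (1 - th)) * l ^+ 2 - l * t))%:E)%E.
Proof.
move=> /andP[p0 p1] hl hU.
rewrite (@binomial_probE R m th p0 p1 U).
under eq_bigr do rewrite diracE -EFinM.
rewrite sumEFin lee_fin /=.
set ph := 1 - th. set M := m%:R * ph.
set A := expR (- (l * (M + t))). set B := expR (l * (M - t)).
have ph0 : 0 <= ph by rewrite /ph; lra.
have M0 : 0 <= M by rewrite /M mulr_ge0.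
apply: (@le_trans _ _ (\sum_(k < m.+1) ((th ^+ k * ph ^+ (m - k) *+ 'C(m, k)) *
   (A * expR l ^+ (m - k) + B * expR (-l) ^+ (m - k))))).
  apply: ler_sum => k _.
  rewrite /unstable.onem -/ph.
  apply: ler_wpM2l; first by rewrite mulrn_wge0 // mulr_ge0 // exprn_ge0.
  have hA : 0 <= A * expR l ^+ (m - k) by rewrite mulr_ge0 ?expR_ge0 ?exprn_ge0 ?expR_ge0.
  have hB : 0 <= B * expR (- l) ^+ (m - k) by rewrite mulr_ge0 ?expR_ge0 ?exprn_ge0 ?expR_ge0.
  case: (boolP (nat_of_ord k \in U)) => kU; last by rewrite /=; lra.
  rewrite /=.
  have := hU _ (set_mem kU).
  have km : (k <= m)%N by rewrite -ltnS ltn_ord.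
  have eA : A * expR l ^+ (m - k) = expR (l * ((m%:R - k%:R) - M - t)).
    by rewrite /A -expRM_natl -expRD natrB //; congr expR; ring.
  have eB : B * expR (- l) ^+ (m - k) = expR (- l * ((m%:R - k%:R) - M) - l * t).
    by rewrite /B -expRM_natl -expRD natrB //; congr expR; ring.
  rewrite eA eB in hA hB *.
  have eM : m%:R - k%:R - M = m%:R * th - k%:R by rewrite /M /ph; ring.
  rewrite eM in hA hB; rewrite eM ltr_normr => /orP[h|h].
  - have : 1 <= expR (- l * (m%:R * th - k%:R) - l * t).
      have -> : - l * (m%:R * th - k%:R) - l * t = l * (k%:R - m%:R * th - t) by ring.
      apply: exp_ge1; apply: mulr_ge0; lra.
    lra.
  - have : 1 <= expR (l * (m%:R * th - k%:R - t)).
      apply: exp_ge1; apply: mulr_ge0; lra.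
    lra.
have esum : \sum_(k < m.+1) ((th ^+ k * ph ^+ (m - k) *+ 'C(m, k)) *
   (A * expR l ^+ (m - k) + B * expR (-l) ^+ (m - k))) =
   A * (ph * expR l + th) ^+ m + B * (ph * expR (- l) + th) ^+ m.
  rewrite -!binsum !mulr_sumr -big_split /=; apply: eq_bigr => k _; ring.
rewrite esum.
have thph : th + ph = 1 by rewrite /ph; ring.
have b1 : A * (ph * expR l + th) ^+ m <= expR (2 * M * l ^+ 2 - l * t).
  apply: (@le_trans _ _ (A * expR (m%:R * (ph * (expR l - 1))))).
    apply: ler_wpM2l; first exact: expR_ge0.
    apply: pow_le_exp => //.
    by rewrite addr_ge0 // mulr_ge0 // expR_ge0.
  rewrite /A -expRD ler_expR.
  have := expl_le l hl.
  have e1 : m%:R * (ph * (expR l - 1)) = M * (expR l - 1) by rewrite /M; ring.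
  rewrite e1 => h.
  have : M * (expR l - 1 - l) <= M * (2 * l ^+ 2) by apply: ler_wpM2l => //; lra.
  have -> : M * (expR l - 1 - l) = M * (expR l - 1) - M * l by ring.
  have -> : M * (2 * l ^+ 2) = 2 * M * l ^+ 2 by ring.
  have -> : - (l * (M + t)) = - (M * l) - l * t by ring.
  lra.
have b2 : B * (ph * expR (- l) + th) ^+ m <= expR (2 * M * l ^+ 2 - l * t).
  apply: (@le_trans _ _ (B * expR (m%:R * (ph * (expR (- l) - 1))))).
    apply: ler_wpM2l; first exact: expR_ge0.
    apply: pow_le_exp => //.
    by rewrite addr_ge0 // mulr_ge0 // expR_ge0.
  rewrite /B -expRD ler_expR.
  have := expNl_le l hl.
  have e1 : m%:R * (ph * (expR (- l) - 1)) = M * (expR (- l) - 1) by rewrite /M; ring.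
  rewrite e1 => h.
  have : M * (expR (- l) - 1 + l) <= M * (2 * l ^+ 2) by apply: ler_wpM2l => //; lra.
  have -> : M * (expR (- l) - 1 + l) = M * (expR (- l) - 1) + M * l by ring.
  have -> : M * (2 * l ^+ 2) = 2 * M * l ^+ 2 by ring.
  have -> : l * (M - t) = M * l - l * t by ring.
  lra.
lra.
Qed.


Lemma bern_lo (x : R) r : 0 <= x <= 1 -> 1 - r%:R * x <= (1 - x) ^+ r.
Proof.
move=> /andP[x0 x1]; elim: r => [|r IH]; first by rewrite expr0 mul0r subr0.
rewrite exprS.
have h : (1 - x) * (1 - r%:R * x) <= (1 - x) * (1 - x) ^+ r.
  by apply: ler_wpM2l => //; lra.
apply: le_trans h.
have : 0 <= r%:R * x ^+ 2 by rewrite mulr_ge0 // sqr_ge0.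
rewrite -[r.+1%:R]natr1.
have -> : (1 - x) * (1 - r%:R * x) = 1 - (r%:R + 1) * x + r%:R * x ^+ 2 by ring.
lra.
Qed.

Lemma bern_hi (x : R) r : 0 <= x <= 1 ->
  (1 - x) ^+ r <= 1 - r%:R * x + (r%:R * x) ^+ 2 / 2.
Proof.
move=> /andP[x0 x1]; elim: r => [|r IH].
  by rewrite expr0 mul0r subr0 expr0n /= mul0r addr0.
rewrite exprS.
have h : (1 - x) * (1 - x) ^+ r <= (1 - x) * (1 - r%:R * x + (r%:R * x) ^+ 2 / 2).
  by apply: ler_wpM2l => //; lra.
apply: le_trans h _.
have : 0 <= x ^+ 2 / 2 + (r%:R * x) ^+ 2 * x / 2.
  by rewrite addr_ge0 // ?mulr_ge0 // ?sqr_ge0 //; lra.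
rewrite -[r.+1%:R]natr1.
have -> : 1 - (r%:R + 1) * x + ((r%:R + 1) * x) ^+ 2 / 2 =
  (1 - x) * (1 - r%:R * x + (r%:R * x) ^+ 2 / 2) +
  (x ^+ 2 / 2 + (r%:R * x) ^+ 2 * x / 2) by field.
lra.
Qed.

Lemma rho_u (rh a : R) : 0 < rh -> 0 < a -> (a ^+ 3)^-1 <= rh ->
  0 < powR rh (- (1/3)) /\ powR rh (- (1/3)) <= a /\
  (a ^+ 2)^-1 <= rh * powR rh (- (1/3)).
Proof.
move=> rh0 a0 hrh.
set u := powR rh (- (1/3)).
have u0 : 0 < u by rewrite /u powR_gt0.
have u3 : u ^+ 3 = rh^-1.
  rewrite -powR_mulrn; last exact: ltW.
  rewrite /u -powRrM.
  have -> : - (1 / 3) * 3%:R = - 1 :> R by field.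
  by rewrite powRN powRr1 //; exact: ltW.
have ua : u <= a.
  have : u ^+ 3 <= a ^+ 3.
    rewrite u3 -(invrK (a ^+ 3)); rewrite lef_pV2 ?posrE ?invr_gt0 ?exprn_gt0 //.
  by rewrite (@ler_pXn2r _ 3%N) // nnegrE ltW.
split => //; split => //.
have e1 : rh * u * u ^+ 2 = 1.
  have -> : rh * u * u ^+ 2 = rh * u ^+ 3 by ring.
  by rewrite u3 mulfV // gt_eqF.
have h2 : u ^+ 2 <= a ^+ 2.
  by rewrite (@ler_pXn2r _ 2%N) // nnegrE ltW.
rewrite -(@ler_pM2r _ (u ^+ 2)) ?exprn_gt0 // e1.
rewrite -(@ler_pM2l _ (a ^+ 2)) ?exprn_gt0 // mulrA mulfV ?gt_eqF ?exprn_gt0 // mul1r mulr1.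
exact: h2.
Qed.


Lemma g_bound (P Q u : R) (r : nat) : 0 < P <= 1 -> 0 < Q <= 1 -> 0 < u ->
  u <= r%:R * P -> r%:R * P < u + P -> (0 < r)%N ->
  `|1 - (1 - P * Q) ^+ r - Q * (1 - (1 - P) ^+ r)| <= Q * (r%:R * P) * u.
Proof.
move=> /andP[P0 P1] /andP[Q0 Q1] u0 uPr Pru r0.
have P01 : 0 <= P <= 1 by rewrite P1 ltW.
have PQ01 : 0 <= P * Q <= 1.
  apply/andP; split; first by rewrite mulr_ge0 // ltW.
  by rewrite mulr_ile1 // ltW.
set y := r%:R * P in uPr Pru *.
have y0 : 0 <= y by lra.
case: (ltnP 1 r) => hr.
- have r2 : 2 <= r%:R :> R by rewrite (ler_nat R 2 r).
  have Pu : P < u.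
    have h1 : 2 * P <= r%:R * P by rewrite ler_wpM2r // ltW.
    rewrite -/y in h1; lra.
  have y2 : y <= 2 * u by lra.
  have lo1 := bern_lo (P * Q) r PQ01.
  have hi1 := bern_hi (P * Q) r PQ01.
  have hi2 := bern_hi P r P01.
  have lo2 := bern_lo P r P01.
  rewrite -/y in hi2 lo2.
  have eyq : r%:R * (P * Q) = y * Q by rewrite /y; ring.
  rewrite eyq in lo1 hi1.
  set z := (1 - P * Q) ^+ r in lo1 hi1 *.
  set th := (1 - P) ^+ r in lo2 hi2 *.
  have k1 : Q * (y - y ^+ 2 / 2) <= Q * (1 - th) by apply: ler_wpM2l; [exact: ltW|lra].
  have k2 : Q * (1 - th) <= Q * y by apply: ler_wpM2l; [exact: ltW|lra].
  have k3 : (y * Q) ^+ 2 / 2 <= Q * y ^+ 2 / 2.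
    have : 0 <= y ^+ 2 * Q * (1 - Q) / 2.
      by rewrite mulr_ge0 // mulr_ge0 // ?mulr_ge0 ?sqr_ge0 //; lra.
    have -> : y ^+ 2 * Q * (1 - Q) / 2 = Q * y ^+ 2 / 2 - (y * Q) ^+ 2 / 2 by field.
    lra.
  have k4 : Q * y ^+ 2 / 2 <= Q * y * u.
    have : Q * y * y <= Q * y * (2 * u) by apply: ler_wpM2l => //; rewrite mulr_ge0 // ltW.
    have -> : Q * y ^+ 2 / 2 = Q * y * y / 2 by field.
    have -> : Q * y * (2 * u) = 2 * (Q * y * u) by ring.
    lra.
  have e1 : Q * (y - y ^+ 2 / 2) = Q * y - Q * y ^+ 2 / 2 by field.
  have e2 : Q * y = y * Q by ring.
  rewrite ler_norml; apply/andP; split; lra.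
- have r1 : r = 1%N by apply/eqP; rewrite eqn_leq hr r0.
  have -> : 1 - (1 - P * Q) ^+ r - Q * (1 - (1 - P) ^+ r) = 0 by rewrite r1 !expr1; ring.
  by rewrite normr0 mulr_ge0 // ?mulr_ge0 // ltW.
Qed.

Lemma D_bound (Fn Q y u en ph g a1 C0 PQN eps : R) :
  `|Fn| <= C0 * PQN -> 0 <= PQN -> `|g| <= Q * y * u -> 0 <= ph <= y ->
  `|en| <= a1 -> u <= a1 -> 0 < Q -> 0 <= y -> 0 < C0 -> a1 = eps / (4 * C0) ->
  `|Fn * (g - Q * en * ph)| <= eps * (PQN * (Q * y)) / 2.
Proof.
move=> hF PQN0 hg /andP[ph0 phy] ena ua Q0 y0 C00 ea.
have h1 : `|g - Q * en * ph| <= Q * y * (2 * a1).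
  apply: (le_trans (ler_normB _ _)).
  have : `|Q * en * ph| <= Q * y * a1.
    rewrite !normrM (ger0_norm (ltW Q0)) (ger0_norm ph0).
    have -> : Q * y * a1 = Q * (a1 * y) by ring.
    rewrite -mulrA; apply: ler_wpM2l; first exact: ltW.
    apply: ler_pM => //.
  have : Q * y * u <= Q * y * a1 by apply: ler_wpM2l => //; rewrite mulr_ge0 // ltW.
  have -> : Q * y * (2 * a1) = Q * y * a1 + Q * y * a1 by ring.
  lra.
rewrite normrM.
apply: le_trans (ler_pM _ _ hF h1) _ => //.
have -> : C0 * PQN * (Q * y * (2 * a1)) = (2 * a1 * C0) * (PQN * (Q * y)) by ring.
have -> : 2 * a1 * C0 = eps / 2 by rewrite ea; field; rewrite gt_eqF.
by rewrite mulrAC.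
Qed.

Lemma M_bound (Fn sn Q en ph y C0 PQN M : R) :
  M = Fn * sn -> 0 <= M -> sn = Q * (1 + en) -> `|en| <= 1 ->
  `|Fn| <= C0 * PQN -> 0 < Q -> 0 <= ph <= y -> 0 <= PQN ->
  M * ph <= 2 * C0 * (PQN * (Q * y)).
Proof.
move=> eM M0 hs en1 hF Q0 /andP[ph0 phy] PQN0.
have h1 : M <= 2 * C0 * PQN * Q.
  rewrite -(ger0_norm M0) eM hs !normrM (ger0_norm (ltW Q0)).
  have h2 : `|1 + en| <= 2 by apply: (le_trans (ler_normD _ _)); rewrite normr1; lra.
  have -> : 2 * C0 * PQN * Q = (C0 * PQN) * (Q * 2) by ring.
  apply: ler_pM => //; first by rewrite mulr_ge0 // ltW.
  by apply: ler_wpM2l => //; exact: ltW.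
have -> : 2 * C0 * (PQN * (Q * y)) = (2 * C0 * PQN * Q) * y by ring.
by apply: ler_pM.
Qed.

Lemma expo_bound (M V C0 lam eps : R) :
  0 <= M <= 2 * C0 * V -> 0 <= V -> 0 <= lam -> 16 * C0 * lam <= eps ->
  2 * M * lam ^+ 2 - lam * (eps * V / 2) <= - (lam * eps / 4 * V).
Proof.
move=> /andP[M0 MV] V0 l0 lC.
have h1 : 2 * M * lam ^+ 2 <= 4 * C0 * V * lam ^+ 2.
  have -> : 4 * C0 * V * lam ^+ 2 = 2 * (2 * C0 * V) * lam ^+ 2 by ring.
  by apply: ler_wpM2r; [exact: sqr_ge0|lra].
have h2 : (16 * C0 * lam) * (lam * V / 4) <= eps * (lam * V / 4).
  by apply: ler_wpM2r => //; rewrite mulr_ge0 // mulr_ge0.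
have e1 : (16 * C0 * lam) * (lam * V / 4) = 4 * C0 * V * lam ^+ 2 by field.
have e2 : eps * (lam * V / 4) = lam * eps / 4 * V by field.
have e3 : lam * (eps * V / 2) = 2 * (lam * eps / 4 * V) by field.
lra.
Qed.

Lemma final_bound (c V N delta X : R) :
  0 < N -> 4 * ln N <= c * V -> 1 <= X * N -> 2 <= delta * N -> 0 < delta ->
  2 * expR (- (c * V)) <= delta * (X / N ^+ 2).
Proof.
move=> N0 hcV hX hd d0.
have h1 : 2 * expR (- (c * V)) <= 2 * expR (- (4 * ln N)).
  by rewrite ler_pM2l // ler_expR lerN2.
apply: le_trans h1 _.
have eN : expR (- (4 * ln N)) = (N ^+ 4)^-1.
  by rewrite expRN expRM_natl lnK // posrE.
rewrite eN.
have N40 : 0 < N ^+ 4 by rewrite exprn_gt0.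
have N20 : 0 < N ^+ 2 by rewrite exprn_gt0.
rewrite ler_pdivrMr //.
have -> : delta * (X / N ^+ 2) * N ^+ 4 = (delta * N) * (X * N) by field; rewrite gt_eqF.
have : 0 <= (delta * N - 2) * (X * N - 1) by rewrite mulr_ge0 //; lra.
have -> : (delta * N - 2) * (X * N - 1) = (delta * N) * (X * N) - 2 * (X * N) - delta * N + 2 by ring.
lra.
Qed.


Lemma rho_facts (P Q N LN A0 a1 a2 : R) : 0 < P -> 0 < Q -> 0 < N -> 1 <= LN ->
  A0 <= P * Q ^+ 2 * N / LN -> A0 = 2 * ((a1 ^+ 3)^-1 + (a2 ^+ 3)^-1) ->
  0 < a1 -> 0 < a2 ->
  let rh := P * Q ^+ 2 * N / (1 + LN) in
  let u := powR rh (- (1 / 3)) in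
  [/\ 0 < rh, 0 < u, u <= a1, (a2 ^+ 2)^-1 <= rh * u & rh * (1 + LN) = P * Q ^+ 2 * N].
Proof.
move=> P0 Q0 N0 L1 hln eA a10 a20 rh u.
have L0 : 0 < 1 + LN by lra.
have LN0 : 0 < LN by lra.
have PQN0 : 0 < P * Q ^+ 2 * N by rewrite mulr_gt0 // mulr_gt0 // exprn_gt0.
have rh0 : 0 < rh by rewrite /rh divr_gt0.
have erh : rh * (1 + LN) = P * Q ^+ 2 * N by rewrite /rh divfK // gt_eqF.
have ia1 : 0 < (a1 ^+ 3)^-1 by rewrite invr_gt0 exprn_gt0.
have ia2 : 0 < (a2 ^+ 3)^-1 by rewrite invr_gt0 exprn_gt0.
have hrh : A0 / 2 <= rh.
  have k1 : A0 * LN <= P * Q ^+ 2 * N by rewrite -ler_pdivlMr.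
  rewrite /rh ler_pdivlMr //.
  have : 0 <= A0 / 2 * (LN - 1) by apply: mulr_ge0; [rewrite eA; lra|lra].
  have -> : A0 / 2 * (LN - 1) = A0 * LN - A0 / 2 * (1 + LN) by field.
  lra.
have hrh1 : (a1 ^+ 3)^-1 <= rh by rewrite eA in hrh; lra.
have hrh2 : (a2 ^+ 3)^-1 <= rh by rewrite eA in hrh; lra.
have [u0 [ua1 _]] := rho_u _ _ rh0 a10 hrh1.
have [_ [_ rhu]] := rho_u _ _ rh0 a20 hrh2.
by split.
Qed.

Lemma a2_facts (a2 c X : R) : a2 = (1 + 4 / c)^-1 -> 0 < c -> (a2 ^+ 2)^-1 <= X ->
  1 <= X /\ 4 / c <= X.
Proof.
move=> ea c0 h.
have c4 : 0 < 4 / c by rewrite divr_gt0.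
have : 1 + 4 / c <= X.
  apply: le_trans h; rewrite ea exprVn invrK.
  have : 0 <= (1 + 4 / c) * (4 / c) by rewrite mulr_ge0 //; lra.
  have -> : (1 + 4 / c) ^+ 2 = (1 + 4 / c) + (1 + 4 / c) * (4 / c) by ring.
  lra.
move=> h'; split; lra.
Qed.

Lemma r_facts (u P : R) : 0 < u -> 0 < P ->
  let r := `|Num.ceil (u / P)|%N in
  [/\ u <= r%:R * P, r%:R * P < u + P & (0 < r)%N].
Proof.
move=> u0 P0 r.
have x0 : 0 < u / P by rewrite divr_gt0.
have er : r%:R = (Num.ceil (u / P))%:~R :> R.
  by rewrite /r natr_absz ger0_norm // ceil_ge0; lra.
have hr1 : u / P <= r%:R by rewrite er ceil_ge.
have hr2 : r%:R - 1 < u / P by rewrite er; have := ceilB1_lt (u / P); rewrite intrB.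
have uPr : u <= r%:R * P by rewrite -ler_pdivrMr.
split => //.
- have : (r%:R - 1) * P < u by rewrite -ltr_pdivlMr.
  have -> : (r%:R - 1) * P = r%:R * P - P by ring.
  lra.
- by rewrite -(ltr0n R); lra.
Qed.

Lemma cV_bound (c W u rh LN y : R) : 0 < c -> u <= y ->
  W = rh * (1 + LN) -> 0 <= W -> 4 / c <= rh * u -> 1 <= rh * u -> 0 <= LN ->
  4 * LN <= c * (W * y) /\ 1 <= W * y.
Proof.
move=> c0 uy eW W0 h4 h1 LN0.
have k1 : W * u <= W * y by apply: ler_wpM2l.
have k2 : W * u = (rh * u) * (1 + LN) by rewrite eW; ring.
have k3 : (4 / c) * (1 + LN) <= (rh * u) * (1 + LN) by apply: ler_wpM2r => //; lra.
have k4 : (1 + LN) <= (rh * u) * (1 + LN).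
  by rewrite -[X in X <= _]mul1r; apply: ler_wpM2r => //; lra.
split; last by lra.
have : c * ((4 / c) * (1 + LN)) <= c * (W * y) by apply: ler_wpM2l; [exact: ltW|lra].
have -> : c * ((4 / c) * (1 + LN)) = 4 * (1 + LN) by field; rewrite gt_eqF.
lra.
Qed.

End Tail.
Arguments rho_facts {R P Q N LN A0 a1 a2}.
Arguments a2_facts {R a2 c X}.
Arguments r_facts {R u P}.
Arguments g_bound {R P Q u r}.
Arguments D_bound {R Fn Q y u en ph g a1 C0 PQN eps}.
Arguments M_bound {R Fn sn Q en ph y C0 PQN M}.
Arguments expo_bound {R M V C0 lam eps}.
Arguments final_bound {R c V N delta X}.
Arguments cV_bound {R c W u rh LN y}.
Arguments bern_lo {R} x r.

Theorem lemma8 (R : realType) (p q F s : nat -> R) (m : nat -> nat) :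
  (forall n, 0 < p n <= 1) ->
  (forall n, 0 < q n <= 1) ->
  (fun n => p n * q n) @ \oo --> 0 ->
  (fun n => p n * q n ^+ 2 * n%:R / ln n%:R) @ \oo --> +oo ->
  (exists C : R, \forall n \near \oo, `|F n| <= C * (p n * q n * n%:R)) ->
  (exists e : nat -> R, e @ \oo --> 0 /\ forall n, s n = q n * (1 + e n)) ->
  (forall n, F n * s n = (m n)%:R) ->
  forall eps : R, 0 < eps ->
  forall delta : R, 0 < delta ->
  \forall n \near \oo,
    (binomial_prob (m n) ((1 - p n) ^+ rr p q n)
       [set k : nat | (eps * (p n ^+ 2 * q n ^+ 2 * n%:R * (rr p q n)%:R) <
          `| k%:R + F n * (1 - s n) - F n * (1 - p n * q n) ^+ rr p q n |)%R]
    <= (delta * (p n ^+ 2 * q n * (rr p q n)%:R / n%:R ^+ 2))%:E)%E.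
Proof.
move=> hp hq _ hlim [C hC] [e [he hse]] hm eps eps0 delta delta0.
set C0 := `|C| + 1.
have C00 : 0 < C0 by rewrite /C0; have := normr_ge0 C; lra.
set a1 := eps / (4 * C0).
have a10 : 0 < a1 by rewrite /a1 divr_gt0 // mulr_gt0.
set lam := eps / (2 * eps + 16 * C0).
have D0 : 0 < 2 * eps + 16 * C0 by lra.
have lam0 : 0 < lam by rewrite /lam divr_gt0.
have elam : lam * (2 * eps + 16 * C0) = eps by rewrite /lam divfK // gt_eqF.
have lamh : 0 <= lam <= 1/2.
  apply/andP; split; first exact: ltW.
  rewrite /lam ler_pdivrMr //; lra.
have lamC : 16 * C0 * lam <= eps.
  have : 0 < eps * lam by rewrite mulr_gt0.
  have : lam * (2 * eps + 16 * C0) = 2 * (eps * lam) + 16 * C0 * lam by ring.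
  lra.
set c := lam * eps / 4.
have c0 : 0 < c by rewrite /c divr_gt0 // mulr_gt0.
set a2 := (1 + 4 / c)^-1.
have a20 : 0 < a2.
  rewrite /a2 invr_gt0; have : 0 < 4 / c by rewrite divr_gt0.
  lra.
set A0 := 2 * ((a1 ^+ 3)^-1 + (a2 ^+ 3)^-1).
have ia1 : 0 < (a1 ^+ 3)^-1 by rewrite invr_gt0 exprn_gt0.
have ia2 : 0 < (a2 ^+ 3)^-1 by rewrite invr_gt0 exprn_gt0.
have A00 : 0 < A0 by rewrite /A0; lra.
move/cvgryPge: hlim => hlim.
move/cvgr0Pnorm_le: he => he.
near=> n.
have Fn : `|F n| <= C * (p n * q n * n%:R) by near: n; exact: hC.
have en1 : `|e n| <= 1 by near: n; apply: he.
have ena : `|e n| <= a1 by near: n; apply: he.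
have hln : A0 <= p n * q n ^+ 2 * n%:R / ln n%:R by near: n; apply: hlim.
have nexp : expR 1 < n%:R :> R by near: n; exact: (@nbhs_infty_gtr R _).
have ndel : 2 / delta < n%:R by near: n; exact: (@nbhs_infty_gtr R _).
have [P0 P1] := andP (hp n).
have [Q0 Q1] := andP (hq n).
have hs := hse n.
have hmn := hm n.
move: Fn en1 ena hln nexp ndel hs hmn.
have -> : (rr p q n) = `|Num.ceil (powR (rho p q n) (- (1/3)) / p n)|%N by [].
have -> : rho p q n = p n * q n ^+ 2 * n%:R / (1 + ln n%:R) by [].
move: P0 P1 Q0 Q1.
set P := p n; set Q := q n; set Fn := F n; set sn := s n; set en := e n; set mn := m n.
set N := n%:R; set LN := ln N.
move=> P0 P1 Q0 Q1 hF en1 ena hln nexp ndel hs hmn.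
have N2 : 2 < N by have := expR_ge1Dx (1 : R); lra.
have N0 : 0 < N by lra.
have L1 : 1 <= LN.
  have : ln (expR 1) <= LN by rewrite ler_ln ?posrE ?expR_gt0 // ltW.
  by rewrite expRK.
have [rh0 u0 ua1 rhu erh] := rho_facts P0 Q0 N0 L1 hln erefl a10 a20.
move: rh0 u0 ua1 rhu erh.
set rh := P * Q ^+ 2 * N / (1 + LN).
set u := powR rh (- (1 / 3)).
move=> rh0 u0 ua1 rhu erh.
have [rhu1 rhu4] := a2_facts erefl c0 rhu.
have [uPr Pru r0] := r_facts u0 P0.
move: uPr Pru r0.
set r := `|Num.ceil (u / P)|%N.
move=> uPr Pru r0.
clearbody r.
set y := r%:R * P in uPr Pru.
have y0 : 0 <= y by apply: mulr_ge0 => //; exact: ltW.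
have P01 : 0 <= P <= 1 by rewrite P1 ltW.
have blo : 1 - y <= (1 - P) ^+ r by exact: bern_lo.
have hg := g_bound (hp n) (hq n) u0 uPr Pru r0.
rewrite -/y in hg.
set th := (1 - P) ^+ r in blo hg *.
have h1P : 0 <= 1 - P by clear -P1; lra.
have h1P' : 1 - P <= 1 by clear -P0; lra.
have th1 : th <= 1 by rewrite /th exprn_ile1.
have th0 : 0 <= th by rewrite /th exprn_ge0.
have th01 : 0 <= th <= 1 by rewrite th0 th1.
set ph := 1 - th in hg.
have phy : 0 <= ph <= y by apply/andP; split; rewrite /ph; lra.
set PQN := P * Q * N.
have PQN0 : 0 <= PQN by rewrite /PQN !mulr_ge0 // ltW.
have hFn : `|Fn| <= C0 * PQN.
  apply: (le_trans hF); apply: ler_wpM2r => //.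
  rewrite /C0; have := ler_norm C; lra.
have hD := D_bound (en := en) hFn PQN0 hg phy ena ua1 Q0 y0 C00 erefl.
set V := PQN * (Q * y) in hD.
have eV : P ^+ 2 * Q ^+ 2 * N * r%:R = V by rewrite /V /PQN /y; ring.
rewrite eV.
have M0 : 0 <= mn%:R :> R by [].
have hM := M_bound (esym hmn) M0 hs en1 hFn Q0 phy PQN0.
rewrite -/V in hM.
have eVW : V = P * Q ^+ 2 * N * y by rewrite /V /PQN; ring.
have eXN : P ^+ 2 * Q * r%:R * N = PQN * y by rewrite /PQN /y; ring.
have ePQN : PQN = P * Q * N by [].
have ec : c = lam * eps / 4 by [].
have eph : ph = 1 - th by [].
clearbody V PQN ph th y.
have ht := @tail R mn th lam (eps * V / 2)
  [set k : nat | (eps * V < `|k%:R + Fn * (1 - sn) - Fn * (1 - P * Q) ^+ r|)%R] th01 lamh.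
have hU : forall k, [set k : nat | (eps * V < `|k%:R + Fn * (1 - sn) - Fn * (1 - P * Q) ^+ r|)%R] k ->
   eps * V / 2 < `|k%:R - mn%:R * th|.
  move=> k /=.
  have -> : k%:R + Fn * (1 - sn) - Fn * (1 - P * Q) ^+ r =
     (k%:R - mn%:R * th) + Fn * ((1 - (1 - P * Q) ^+ r - Q * ph) - Q * en * ph).
    by rewrite -hmn hs eph; ring.
  move=> h.
  have := ler_normD (k%:R - mn%:R * th) (Fn * ((1 - (1 - P * Q) ^+ r - Q * ph) - Q * en * ph)).
  move: hD h; clear; lra.
apply: (le_trans (ht hU)).
rewrite lee_fin.
have V0 : 0 <= V by rewrite eVW !mulr_ge0 // ?exprn_ge0 // ltW.
have hMph : 0 <= mn%:R * ph <= 2 * C0 * V by rewrite hM mulr_ge0 //; case/andP: phy.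
have hexp := expo_bound hMph V0 (ltW lam0) lamC.
apply: (le_trans (y := 2 * expR (- (lam * eps / 4 * V)))).
  by rewrite -eph ler_pM2l // ler_expR.
have W0 : 0 <= P * Q ^+ 2 * N by rewrite !mulr_ge0 // ?exprn_ge0 // ltW.
have [cV1 cV2] := cV_bound c0 uPr (esym erh) W0 rhu4 rhu1 (le_trans ler01 L1).
apply: final_bound => //.
- by rewrite -ec eVW.
- rewrite eXN.
  apply: le_trans cV2 _; apply: ler_wpM2r => //.
  rewrite ePQN (_ : P * Q ^+ 2 * N = (P * Q * N) * Q); last by ring.
  rewrite -[X in _ <= X]mulr1; apply: ler_wpM2l => //.
  by rewrite !mulr_ge0 // ltW.
- have := ndel; rewrite ltr_pdivrMr //; lra.
Unshelve. all: by end_near.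
Qed.
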